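(* Let $n$ be odd and let $L=\bigoplus_{i\in\mathbb{Z}/n\mathbb{Z}}L_i$ be a $(\mathbb{Z}/n\mathbb{Z})$-graded Lie algebra over a field with $L_0=0$ that satisfies the selective metabelian condition. Let $d_1,d_2,d_3,d_4\in\mathbb{Z}/n\mathbb{Z}$ with $(d_1,d_2,d_3)$ $(-1)$-independent and $d_4\in D(d_1,d_2,d_3)$, and let $u_{d_i}\in L_{d_i}$. Then every product of the form $$\big[[u_{d_1},u_{d_2}],[u_{d_3},u_{d_4}],x_{i_1},\dots,x_{i_t}\big],$$ where each $x_{i_k}=[y_k,z_k]$ with $y_k\in L_{w_k}$, $z_k\in L_{i_k-w_k}$ for some $w_k\in\mathbb{Z}/n\mathbb{Z}$, can be written as a linear combination of products of the form $$\big[[u_{d_1},u_{d_2}],[u_{d_3},u_{d_4}],m_{j_1},\dots,m_{j_s}\big],$$ where $s\le t$ and each $m_{j_k}=[p_k,q_k]$ with $p_k\in L_{u_k}$, $q_k\in L_{j_k-u_k}$, such that $j_k\in\widetilde D(d_1,d_2,d_3,d_4)$ and at least one of $u_k$, $j_k-u_k$ belongs to $\widetilde D(d_1,d_2,d_3,d_4)$.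
   Context: A $(\mathbb{Z}/n\mathbb{Z})$-graded Lie algebra is $L=\bigoplus_{i=0}^{n-1}L_i$ with $[L_i,L_j]\subseteq L_{i+j \bmod n}$. Products $[y_1,\dots,y_s]$ are left-normed: $[\dots[[y_1,y_2],y_3],\dots,y_s]$. A sequence $(a_1,\dots,a_k)$ in $\mathbb{Z}/n\mathbb{Z}$ is $(-1)$-dependent if $t_1a_1+\dots+t_ka_k=0$ for some $t_i\in\{0,1\}$ not all zero, and $(-1)$-independent otherwise. For a $(-1)$-independent sequence $(a_1,\dots,a_k)$, $D(a_1,\dots,a_k)$ is the set of $j\in\mathbb{Z}/n\mathbb{Z}$ such that $(a_1,\dots,a_k,j)$ is $(-1)$-dependent. For any sequence $(b_1,\dots,b_s)$, $\widetilde D(b_1,\dots,b_s)$ is the set of all $u_1b_1+\dots+u_sb_s$ with $u_i\in\{0,\pm1,\pm2\}$. $L$ satisfies the selective metabelian condition if $\big[[x_{d_1},x_{d_2}],[x_{d_3},x_{d_4}]\big]=0$ for all $x_{d_i}\in L_{d_i}$ whenever $(d_1,d_2,d_3,d_4)$ is $(-1)$-independent. *)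

(* Defs.v *)
From HB Require Import structures.
From mathcomp Require Import all_boot all_order all_algebra.
Set Implicit Arguments. Unset Strict Implicit. Unset Printing Implicit Defensive.
Import GRing.Theory.
Local Open Scope ring_scope.

(* Index group Z/NZ is modelled as 'I_N with N = m.+1 (canonical zmodType). *)

Definition is_lie_bracket (K : fieldType) (L : lmodType K) (br : L -> L -> L) : Prop :=
  [/\ (forall (a : K) (x y z : L), br (a *: x + y) z = a *: br x z + br y z),
      (forall (a : K) (x y z : L), br z (a *: x + y) = a *: br z x + br z y),
      (forall x : L, br x x = 0) &
      (forall x y z : L, br x (br y z) + br y (br z x) + br z (br x y) = 0)].

Definition is_grading (K : fieldType) (L : lmodType K) (m : nat)
  (br : L -> L -> L) (G : 'I_m.+1 -> L -> Prop) : Prop :=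
  [/\ (forall i, G i 0),
      (forall i (a : K) (x y : L), G i x -> G i y -> G i (a *: x + y)),
      (forall x : L, exists f : 'I_m.+1 -> L, (forall i, G i (f i)) /\ x = \sum_i f i),
      (forall f : 'I_m.+1 -> L, (forall i, G i (f i)) -> \sum_i f i = 0 ->
          forall i, f i = 0) &
      (forall i j x y, G i x -> G j y -> G (i + j) (br x y))].

Definition minus1_dependent (N : nat) (a : seq 'I_N.+1) : Prop :=
  exists t : seq bool, size t = size a /\ has id t /\
    \sum_(k < size a) (if nth false t k then nth 0 a k else 0) = 0.

Definition minus1_independent (N : nat) (a : seq 'I_N.+1) : Prop :=
  ~ minus1_dependent a.

Definition Dset (N : nat) (a : seq 'I_N.+1) (j : 'I_N.+1) : Prop :=
  minus1_dependent (rcons a j).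

Definition Dtilde (N : nat) (b : seq 'I_N.+1) (j : 'I_N.+1) : Prop :=
  exists u : seq int, size u = size b /\
    (forall k, (k < size u)%N -> -2 <= nth 0 u k <= 2) /\
    j = \sum_(k < size b) (nth 0 b k) *~ (nth 0 u k).

Definition lnprod (L : Type) (br : L -> L -> L) (x0 : L) (xs : seq L) : L :=
  foldl br x0 xs.

Definition selective_metabelian (K : fieldType) (L : lmodType K) (m : nat)
  (br : L -> L -> L) (G : 'I_m.+1 -> L -> Prop) : Prop :=
  forall d1 d2 d3 d4 : 'I_m.+1, minus1_independent [:: d1; d2; d3; d4] ->
  forall x1 x2 x3 x4 : L, G d1 x1 -> G d2 x2 -> G d3 x3 -> G d4 x4 ->
    br (br x1 x2) (br x3 x4) = 0.

(* Main.v *)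
Require Import Defs.
From HB Require Import structures.
From mathcomp Require Import all_boot all_order all_algebra.
From mathcomp Require Import ring zify.
From Stdlib Require Import Classical.
Import GRing.Theory.
Local Open Scope ring_scope.

Section Degrees.
Variable N : nat.
Variables d1 d2 d3 d4 w : 'I_N.+2.

Definition lv (v : seq nat) : 'I_N.+2 :=
  d1 *+ nth 0%N v 0 + d2 *+ nth 0%N v 1 + d3 *+ nth 0%N v 2 + d4 *+ nth 0%N v 3.

Definition vsel (b : bool) (v : seq nat) : seq nat := if b then v else [:: 0%N; 0%N; 0%N; 0%N].
Definition vadd (v v' : seq nat) : seq nat :=
  [:: Nat.add (nth 0%N v 0) (nth 0%N v' 0); Nat.add (nth 0%N v 1) (nth 0%N v' 1);
      Nat.add (nth 0%N v 2) (nth 0%N v' 2); Nat.add (nth 0%N v 3) (nth 0%N v' 3)].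
Definition vcomb b1 b2 b3 b4 va vb vc vs :=
  vadd (vsel b1 va) (vadd (vsel b2 vb) (vadd (vsel b3 vc) (vsel b4 vs))).

Lemma lv_vadd v v' : lv (vadd v v') = lv v + lv v'.
Proof.
rewrite /lv /vadd /=.
rewrite !(mulrnDr _ (nth 0%N v _) (nth 0%N v' _)). ring.
Qed.

Lemma lv_vsel b v : lv (vsel b v) = if b then lv v else 0.
Proof. by case: b => //=; rewrite /lv /= !mulr0n !addr0. Qed.

Lemma indep_lv va vb vc vs :
  (forall b1 b2 b3 b4 : bool, [|| b1, b2, b3 | b4] ->
     (if b4 then w + lv (vcomb b1 b2 b3 b4 va vb vc vs)
      else lv (vcomb b1 b2 b3 b4 va vb vc vs)) != 0) ->
  minus1_independent [:: lv va; lv vb; lv vc; lv vs + w].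
Proof.
move=> H [t [Ht [Hh Hs]]].
case: t Ht Hh Hs => [|b1 [|b2 [|b3 [|b4 [|]]]]] //= _ Hh.
rewrite !big_ord_recl big_ord0 /=.
move: (H b1 b2 b3 b4); rewrite /vcomb !lv_vadd !lv_vsel.
case: b1 b2 b3 b4 Hh => [] [] [] [] //= _ /(_ isT) /negP HH Hs; apply: HH; apply/eqP;
  rewrite -[X in _ = X]Hs; ring.
Qed.

Lemma wne (v : seq nat) : ~ Dtilde [:: d1; d2; d3; d4] w ->
  size v = 4%N -> all (fun k => k <= 2)%N v -> w + lv v != 0.
Proof.
move=> Hw Hsz Hall; apply/negP => /eqP Hs; apply: Hw.
exists [:: - (nth 0%N v 0)%:Z; - (nth 0%N v 1)%:Z; - (nth 0%N v 2)%:Z; - (nth 0%N v 3)%:Z].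
split; first by [].
split.
  move=> k; case: v Hsz Hall {Hs} => [|a [|b [|c [|e []]]]] //= _ /and5P[Ha Hb Hc He _].
  case: k => [|[|[|[|k]]]] //= _; apply/andP; split; lia.
rewrite !big_ord_recl big_ord0 /=.
rewrite !mulrNz -!pmulrn.
rewrite -(addrK (lv v) w) Hs /lv; ring.
Qed.

End Degrees.
Arguments lv {N} d1 d2 d3 d4 v.
Arguments lv_vadd {N d1 d2 d3 d4} v v'.
Arguments wne {N d1 d2 d3 d4 w v}.
Arguments indep_lv {N d1 d2 d3 d4 w va vb vc vs}.

Section Lie.
Variables (K : fieldType) (L : lmodType K) (br : L -> L -> L).
Hypothesis Hlie : is_lie_bracket br.

Lemma brDl x y z : br (x + y) z = br x z + br y z.
Proof. case: Hlie => H _ _ _. by have := H 1 x y z; rewrite !scale1r. Qed.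
Lemma brDr x y z : br z (x + y) = br z x + br z y.
Proof. case: Hlie => _ H _ _. by have := H 1 x y z; rewrite !scale1r. Qed.
Lemma br0l z : br 0 z = 0.
Proof. have h := brDl 0 0 z; rewrite addr0 in h. by apply: (addrI (br 0 z)); rewrite addr0 -h. Qed.
Lemma br0r z : br z 0 = 0.
Proof. have h := brDr 0 0 z; rewrite addr0 in h. by apply: (addrI (br z 0)); rewrite addr0 -h. Qed.
Lemma brZl a x z : br (a *: x) z = a *: br x z.
Proof. case: Hlie => H _ _ _. by have := H a x 0 z; rewrite !addr0 br0l addr0. Qed.
Lemma brZr a x z : br z (a *: x) = a *: br z x.
Proof. case: Hlie => _ H _ _. by have := H a x 0 z; rewrite !addr0 br0r addr0. Qed.
Lemma brNl x z : br (- x) z = - br x z.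
Proof. by rewrite -scaleN1r brZl scaleN1r. Qed.
Lemma brNr x z : br z (- x) = - br z x.
Proof. by rewrite -scaleN1r brZr scaleN1r. Qed.
Lemma brC x y : br x y = - br y x.
Proof.
case: Hlie => _ _ H _.
have := H (x + y); rewrite brDl !brDr !H add0r addr0 => /eqP.
by rewrite addr_eq0 => /eqP.
Qed.
Lemma JL a b x : br (br a b) x = br (br a x) b + br a (br b x).
Proof.
case: Hlie => _ _ _ H.
have := H a b x.
rewrite [br b (br x a)]brC [br x a]brC brNl opprK [br x (br a b)]brC.
move/eqP; rewrite subr_eq0 => /eqP <-. by rewrite addrC.
Qed.
Lemma JR x a b : br x (br a b) = br (br x a) b + br a (br x b).
Proof. by rewrite brC JL opprD [br x a]brC [br x b]brC brNl brNr. Qed.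
Lemma br_sum I (r : seq I) (F : I -> L) z :
  br (\sum_(i <- r) F i) z = \sum_(i <- r) br (F i) z.
Proof. exact: (big_morph (fun v => br v z) (fun x y => brDl x y z) (br0l z)). Qed.
End Lie.

Ltac lvE := rewrite /lv /= ?mulr1n ?mulr0n ?addr0 ?add0r.

Section L3.
Variables (K : fieldType) (L : lmodType K) (N : nat) (br : L -> L -> L)
  (G : 'I_N.+2 -> L -> Prop).
Hypotheses (Hlie : is_lie_bracket br) (Hgr : is_grading br G)
  (H0 : forall x, G 0 x -> x = 0) (Hsm : selective_metabelian br G).
Variables d1 d2 d3 d4 : 'I_N.+2.
Hypothesis Hind : minus1_independent [:: d1; d2; d3].
Variables u1 u2 u3 u4 : L.
Hypotheses (G1 : G d1 u1) (G2 : G d2 u2) (G3 : G d3 u3) (G4 : G d4 u4).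
Variables (w : 'I_N.+2) (y : L).
Hypotheses (Gy : G w y) (Hw : ~ Dtilde [:: d1; d2; d3; d4] w).

Local Notation LV := (lv d1 d2 d3 d4).

Lemma Gbr {i j : 'I_N.+2} {x z : L} : G i x -> G j z -> G (i + j) (br x z).
Proof. by case: Hgr => _ _ _ _; apply. Qed.

Lemma Gzero {i : 'I_N.+2} {x : L} : G i x -> i = 0 -> x = 0.
Proof. by move=> h e; apply: H0; rewrite -e. Qed.

Lemma free3 (b1 b2 b3 : bool) : [|| b1, b2 | b3] ->
  LV [:: nat_of_bool b1; nat_of_bool b2; nat_of_bool b3; 0%N] != 0.
Proof.
move=> Hb; apply/negP => /eqP H; apply: Hind; exists [:: b1; b2; b3].
split; first by []. split; first by rewrite /= orbF.
rewrite /= !big_ord_recl big_ord0 /=; move: H; rewrite /lv /=.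
by case: b1 b2 b3 Hb => [] [] [] //= _ H; rewrite -[X in _ = X]H; ring.
Qed.

Lemma lv_sub v v' : LV (vadd v v') = 0 -> LV v != 0 -> LV v' != 0.
Proof.
rewrite lv_vadd => h /negP hv; apply/negP => /eqP hv'; apply: hv.
by rewrite hv' addr0 in h; apply/eqP.
Qed.

Lemma M0 va vb vc vs x1 x2 x3 x4 :
  G (LV va) x1 -> G (LV vb) x2 -> G (LV vc) x3 -> G (LV vs + w) x4 ->
  (forall b1 b2 b3 b4 : bool, [|| b1, b2, b3 | b4] ->
     (if b4 then w + LV (vcomb b1 b2 b3 b4 va vb vc vs)
      else LV (vcomb b1 b2 b3 b4 va vb vc vs)) != 0) ->
  br (br x1 x2) (br x3 x4) = 0.
Proof. by move=> h1 h2 h3 h4 hc; exact: (Hsm _ _ _ _ (indep_lv hc) _ _ _ _ h1 h2 h3 h4). Qed.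

Ltac gmem := lvE; repeat first [ exact: Gy | exact: G1 | exact: G2 | exact: G3 | exact: G4 | apply: Gbr ].
Ltac solve_nz := first [ apply: (wne Hw) => //
  | exact: (free3 true false false isT) | exact: (free3 false true false isT)
  | exact: (free3 false false true isT) | exact: (free3 true true false isT)
  | exact: (free3 true false true isT) | exact: (free3 false true true isT)
  | exact: (free3 true true true isT) | assumption ].
Ltac neg0 := apply/eqP; rewrite oppr_eq0; apply/eqP.
Ltac conds := move=> [] [] [] [] //= _; solve_nz.
Ltac m0 va vb vc vs := apply: (M0 va vb vc vs); [gmem | gmem | gmem | gmem | conds].

Lemma lemma3 : br (br (br u1 u2) (br u3 u4)) y = 0.
Proof.
have bC := @brC _ _ br Hlie; have bJL := @JL _ _ br Hlie; have bJR := @JR _ _ br Hlie.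
have b0l := @br0l _ _ br Hlie; have b0r := @br0r _ _ br Hlie.
have bDl := @brDl _ _ br Hlie; have bDr := @brDr _ _ br Hlie.
have bNl := @brNl _ _ br Hlie; have bNr := @brNr _ _ br Hlie.
case: (eqVneq (LV [:: 0; 0; 0; 1]%N) 0) => z4.
  by rewrite (Gzero G4) ?b0r ?b0l //; move: z4; lvE.
case: (eqVneq (LV [:: 0; 0; 1; 1]%N) 0) => z34.
  by rewrite (Gzero (Gbr G3 G4)) ?b0r ?b0l //; move: z34; lvE.
case: (eqVneq (LV [:: 1; 1; 1; 1]%N) 0) => z1234.
  by rewrite (Gzero (Gbr (Gbr G1 G2) (Gbr G3 G4))) ?b0l // !addrA; move: z1234; lvE.
have P1 : br (br u1 u2) (br u3 (br u4 y)) = 0.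
  by m0 [:: 1; 0; 0; 0]%N [:: 0; 1; 0; 0]%N [:: 0; 0; 1; 0]%N [:: 0; 0; 0; 1]%N.
have P2a : br (br u1 u2) (br u3 y) = 0.
  by m0 [:: 1; 0; 0; 0]%N [:: 0; 1; 0; 0]%N [:: 0; 0; 1; 0]%N [:: 0; 0; 0; 0]%N.
have Pz : br (br u1 u2) (br (br u3 u4) y) = 0.
  rewrite [br (br u3 u4) y]bJL bDr P1 addr0 bJR P2a b0l add0r.
  case: (eqVneq (LV [:: 1; 1; 0; 1]%N) 0) => z124.
    by rewrite (Gzero (Gbr (Gbr G1 G2) G4)) ?b0r //; move: z124; lvE.
  rewrite bC; neg0.
  by m0 [:: 1; 1; 0; 0]%N [:: 0; 0; 0; 1]%N [:: 0; 0; 1; 0]%N [:: 0; 0; 0; 0]%N.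
case: (eqVneq (LV [:: 1; 1; 0; 1]%N) 0) => z124; last first.
  rewrite bJL Pz addr0 bC; neg0.
  by m0 [:: 0; 0; 1; 0]%N [:: 0; 0; 0; 1]%N [:: 1; 1; 0; 0]%N [:: 0; 0; 0; 0]%N.
have n0101 : LV [:: 0; 1; 0; 1]%N != 0.
  exact: (lv_sub [:: 1; 0; 0; 0]%N [:: 0; 1; 0; 1]%N z124 (free3 true false false isT)).
have n1001 : LV [:: 1; 0; 0; 1]%N != 0.
  exact: (lv_sub [:: 0; 1; 0; 0]%N [:: 1; 0; 0; 1]%N z124 (free3 false true false isT)).
case: (eqVneq (LV [:: 1; 0; 1; 1]%N) 0) => z134;
case: (eqVneq (LV [:: 0; 1; 1; 1]%N) 0) => z234.
- rewrite [br (br u1 u2) _]bJL (Gzero (Gbr G1 (Gbr G3 G4))); last first.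
    by rewrite !addrA; move: z134; lvE.
  rewrite (Gzero (Gbr G2 (Gbr G3 G4))); last first.
    by rewrite !addrA; move: z234; lvE.
  by rewrite b0l b0r addr0 b0l.
all: rewrite bJL Pz addr0 [br (br u1 u2) y]bJL bDl.
-
  have -> : br (br (br u1 y) u2) (br u3 u4) = 0.
    rewrite bC [br (br u1 y) u2]bC bNr opprK.
    by m0 [:: 0; 0; 1; 0]%N [:: 0; 0; 0; 1]%N [:: 0; 1; 0; 0]%N [:: 1; 0; 0; 0]%N.
  rewrite add0r bJL (Gzero (Gbr G1 (Gbr G3 G4))); last first.
    by rewrite !addrA; move: z134; lvE.
  rewrite b0l add0r (_ : br (br u2 y) (br u3 u4) = 0) ?b0r //.
  rewrite bC; neg0.
  by m0 [:: 0; 0; 1; 0]%N [:: 0; 0; 0; 1]%N [:: 0; 1; 0; 0]%N [:: 0; 0; 0; 0]%N.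
-
  have -> : br (br u1 (br u2 y)) (br u3 u4) = 0.
    rewrite bC; neg0.
    by m0 [:: 0; 0; 1; 0]%N [:: 0; 0; 0; 1]%N [:: 1; 0; 0; 0]%N [:: 0; 1; 0; 0]%N.
  rewrite addr0 bJL (Gzero (Gbr G2 (Gbr G3 G4))); last first.
    by rewrite !addrA; move: z234; lvE.
  rewrite b0r addr0 (_ : br (br u1 y) (br u3 u4) = 0) ?b0l //.
  rewrite bC; neg0.
  by m0 [:: 0; 0; 1; 0]%N [:: 0; 0; 0; 1]%N [:: 1; 0; 0; 0]%N [:: 0; 0; 0; 0]%N.
-
  have -> : br (br (br u1 y) u2) (br u3 u4) = 0.
    rewrite bC [br (br u1 y) u2]bC bNr opprK.
    by m0 [:: 0; 0; 1; 0]%N [:: 0; 0; 0; 1]%N [:: 0; 1; 0; 0]%N [:: 1; 0; 0; 0]%N.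
  rewrite add0r bC; neg0.
  by m0 [:: 0; 0; 1; 0]%N [:: 0; 0; 0; 1]%N [:: 1; 0; 0; 0]%N [:: 0; 1; 0; 0]%N.
Qed.
End L3.

Lemma lemma3_gen (K : fieldType) (L : lmodType K) (m : nat)
  (br : L -> L -> L) (G : 'I_m.+1 -> L -> Prop) :
  is_lie_bracket br -> is_grading br G -> (forall x, G 0 x -> x = 0) ->
  selective_metabelian br G ->
  forall d1 d2 d3 d4 : 'I_m.+1, minus1_independent [:: d1; d2; d3] ->
  forall u1 u2 u3 u4 : L, G d1 u1 -> G d2 u2 -> G d3 u3 -> G d4 u4 ->
  forall (w : 'I_m.+1) (y : L), G w y -> ~ Dtilde [:: d1; d2; d3; d4] w ->
  br (br (br u1 u2) (br u3 u4)) y = 0.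
Proof.
case: m G => [|N] G Hl Hg H0 Hs d1 d2 d3 d4 Hi u1 u2 u3 u4 G1 G2 G3 G4 w y Gy Hw.
  exfalso; apply: Hi; exists [:: true; false; false].
  split; first by []. split; first by [].
  have h : forall a b : 'I_1, a = b by move=> a b; rewrite (ord1 a) (ord1 b).
  exact: h.
exact: (@lemma3 K L N br G Hl Hg H0 Hs d1 d2 d3 d4 Hi u1 u2 u3 u4 G1 G2 G3 G4 w y Gy Hw).
Qed.

Section Main.
Variables (K : fieldType) (L : lmodType K) (m : nat) (br : L -> L -> L)
  (G : 'I_m.+1 -> L -> Prop).
Hypotheses (Hlie : is_lie_bracket br) (Hgr : is_grading br G).
Variables d1 d2 d3 d4 : 'I_m.+1.
Variables u1 u2 u3 u4 : L.
Local Notation T := (br (br u1 u2) (br u3 u4)).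
Hypothesis L3 : forall (w : 'I_m.+1) (y : L), G w y ->
  ~ Dtilde [:: d1; d2; d3; d4] w -> br T y = 0.

Definition good (p : L * L) : Prop := exists u j : 'I_m.+1,
  Dtilde [:: d1; d2; d3; d4] j /\
  (Dtilde [:: d1; d2; d3; d4] u \/ Dtilde [:: d1; d2; d3; d4] (j - u)) /\
  G u p.1 /\ G (j - u) p.2.
Definition goods (s : seq (L * L)) : Prop :=
  forall k, (k < size s)%N -> good (nth (0, 0) s k).
Definition lnp (s : seq (L * L)) : L := lnprod br T [seq br p.1 p.2 | p <- s].
Definition Span (n : nat) (v : L) : Prop :=
  exists cs : seq (K * seq (L * L)),
    (forall c, c \in cs -> (size c.2 <= n)%N /\ goods c.2) /\
    v = \sum_(c <- cs) c.1 *: lnp c.2.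

Lemma GbrM {i j : 'I_m.+1} {x z : L} : G i x -> G j z -> G (i + j) (br x z).
Proof. by case: Hgr => _ _ _ _; apply. Qed.

Lemma lnp_rcons s p : lnp (rcons s p) = br (lnp s) (br p.1 p.2).
Proof. by rewrite /lnp map_rcons /lnprod foldl_rcons. Qed.

Lemma goods_rcons {s p} : goods s -> good p -> goods (rcons s p).
Proof.
move=> hs hp k; rewrite size_rcons ltnS leq_eqVlt => /orP[/eqP -> | hk].
  by rewrite nth_rcons ltnn eqxx.
by rewrite nth_rcons hk; apply: hs.
Qed.

Lemma goods_rcons_inv {s p} : goods (rcons s p) -> goods s /\ good p.
Proof.
move=> h; split.
  by move=> k hk; have := h k; rewrite size_rcons nth_rcons hk ltnS ltnW //; apply.
by have := h (size s); rewrite size_rcons nth_rcons ltnn eqxx; apply.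
Qed.

Lemma Span0 n : Span n 0.
Proof. by exists [::]; split => //; rewrite big_nil. Qed.

Lemma SpanD n v v' : Span n v -> Span n v' -> Span n (v + v').
Proof.
move=> [cs [h1 ->]] [cs' [h2 ->]]; exists (cs ++ cs'); split.
  by move=> c; rewrite mem_cat => /orP[/h1 | /h2].
by rewrite big_cat.
Qed.

Lemma SpanZ n a v : Span n v -> Span n (a *: v).
Proof.
move=> [cs [h ->]]; exists [seq (a * c.1, c.2) | c <- cs]; split.
  by move=> c /mapP [c' /h hc' ->].
by rewrite big_map scaler_sumr; apply: eq_bigr => c _; rewrite scalerA.
Qed.

Lemma Span_mono {n n' v} : (n <= n')%N -> Span n v -> Span n' v.
Proof.
move=> hn [cs [h ->]]; exists cs; split => // c /h [h1 h2]; split => //.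
exact: leq_trans hn.
Qed.

Lemma Span_gen n s : goods s -> (size s <= n)%N -> Span n (lnp s).
Proof.
move=> hs hn; exists [:: (1, s)]; split.
  by move=> c; rewrite inE => /eqP ->.
by rewrite big_seq1 scale1r.
Qed.

Lemma Span_br {n n' v x} : Span n v ->
  (forall s, goods s -> (size s <= n)%N -> Span n' (br (lnp s) x)) ->
  Span n' (br v x).
Proof.
move=> [cs [h ->]] H; rewrite (@br_sum _ _ br Hlie).
elim: cs h => [|c cs IH] h; first by rewrite big_nil; apply: Span0.
rewrite big_cons; apply: SpanD.
  rewrite (@brZl _ _ br Hlie); apply: SpanZ.
  by have [h1 h2] := h c (mem_head _ _); apply: H.
by apply: IH => c' hc'; apply: h; rewrite inE hc' orbT.
Qed.

Lemma claimD {s} : goods s -> forall g x, G g x -> br T x = 0 ->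
  Span (size s) (br (lnp s) x).
Proof.
elim/last_ind: s => [|s p IH] Hs g x Gx Tx.
  by rewrite /lnp /lnprod /= Tx; apply: Span0.
have [Hs0 Hp] := goods_rcons_inv Hs.
rewrite lnp_rcons (@JL _ _ br Hlie); apply: SpanD.
  apply: (Span_br (IH Hs0 g x Gx Tx)) => s' hs' hsz.
  rewrite -lnp_rcons; apply: Span_gen; first exact: goods_rcons.
  by rewrite !size_rcons.
have [u [j [Dj [Du [Gu Gv]]]]] := Hp.
have Gm : G j (br p.1 p.2) by rewrite -[j](subrK u) addrC; apply: GbrM.
have Gmx := GbrM Gm Gx.
case: (classic (Dtilde [:: d1; d2; d3; d4] (j + g))) => Hjg.
  rewrite -(lnp_rcons s (br p.1 p.2, x)); apply: Span_gen; last by rewrite !size_rcons.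
  apply: goods_rcons => //; exists j, (j + g); split => //; split; first by left.
  by split => //=; rewrite [j + g]addrC addrK.
apply: (Span_mono _ (IH Hs0 _ _ Gmx (L3 _ _ Gmx Hjg))).
by rewrite size_rcons.
Qed.

Lemma mainD yz : (forall k, (k < size yz)%N -> exists w i : 'I_m.+1,
      G w (nth (0, 0) yz k).1 /\ G (i - w) (nth (0, 0) yz k).2) ->
  Span (size yz) (lnp yz).
Proof.
elim/last_ind: yz => [|yz p IH] Hyz.
  by apply: Span_gen.
have Hyz0 : forall k, (k < size yz)%N -> exists w i : 'I_m.+1,
      G w (nth (0, 0) yz k).1 /\ G (i - w) (nth (0, 0) yz k).2.
  by move=> k hk; have := Hyz k; rewrite size_rcons nth_rcons hk ltnS ltnW //; apply.
have [w [i [Gy Gz]]] : exists w i : 'I_m.+1, G w p.1 /\ G (i - w) p.2.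
  by have := Hyz (size yz); rewrite size_rcons nth_rcons ltnn eqxx; apply.
have Gx : G i (br p.1 p.2) by rewrite -[i](subrK w) addrC; apply: GbrM.
rewrite lnp_rcons; apply: (Span_br (IH Hyz0)) => s hs hsz.
case: (classic (good p)) => Hp.
  rewrite -lnp_rcons; apply: Span_gen; first exact: goods_rcons.
  by rewrite !size_rcons.
have Tx : br T (br p.1 p.2) = 0.
  case: (classic (Dtilde [:: d1; d2; d3; d4] i)) => Hi; last exact: L3 _ _ Gx Hi.
  have Hw : ~ Dtilde [:: d1; d2; d3; d4] w.
    by move=> hw; apply: Hp; exists w, i; split => //; split => //; left.
  have Hiw : ~ Dtilde [:: d1; d2; d3; d4] (i - w).
    by move=> hw; apply: Hp; exists w, i; split => //; split => //; right.
  by rewrite (@JR _ _ br Hlie) (L3 _ _ Gy Hw) (L3 _ _ Gz Hiw) (@br0l _ _ br Hlie) (@br0r _ _ br Hlie) addr0.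
apply: (Span_mono _ (claimD hs _ _ Gx Tx)).
by rewrite size_rcons; apply: leqW.
Qed.
End Main.

(* The paper's odd modulus n is m.+1; indices live in 'I_m.+1 = Z/nZ. *)
Theorem lemma4 (K : fieldType) (L : lmodType K) (m : nat)
  (br : L -> L -> L) (G : 'I_m.+1 -> L -> Prop) :
  odd m.+1 ->
  is_lie_bracket br ->
  is_grading br G ->
  (forall x, G 0 x -> x = 0) ->
  selective_metabelian br G ->
  forall (d1 d2 d3 d4 : 'I_m.+1),
  minus1_independent [:: d1; d2; d3] ->
  Dset [:: d1; d2; d3] d4 ->
  forall (u1 u2 u3 u4 : L), G d1 u1 -> G d2 u2 -> G d3 u3 -> G d4 u4 ->
  forall (yz : seq (L * L)),
  (forall k, (k < size yz)%N -> exists w i : 'I_m.+1,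
      G w (nth (0, 0) yz k).1 /\ G (i - w) (nth (0, 0) yz k).2) ->
  exists cs : seq (K * seq (L * L)),
    (forall c, c \in cs -> (size c.2 <= size yz)%N /\
       forall k, (k < size c.2)%N -> exists u j : 'I_m.+1,
         Dtilde [:: d1; d2; d3; d4] j /\
         (Dtilde [:: d1; d2; d3; d4] u \/ Dtilde [:: d1; d2; d3; d4] (j - u)) /\
         G u (nth (0, 0) c.2 k).1 /\ G (j - u) (nth (0, 0) c.2 k).2) /\
    lnprod br (br (br u1 u2) (br u3 u4)) [seq br p.1 p.2 | p <- yz] =
    \sum_(c <- cs) c.1 *: lnprod br (br (br u1 u2) (br u3 u4))
                                    [seq br p.1 p.2 | p <- c.2].
Proof.
move=> _ Hl Hg H0 Hs d1 d2 d3 d4 Hi _ u1 u2 u3 u4 G1 G2 G3 G4 yz Hyz.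
have L3 := @lemma3_gen K L m br G Hl Hg H0 Hs d1 d2 d3 d4 Hi u1 u2 u3 u4 G1 G2 G3 G4.
exact: (@mainD K L m br G Hl Hg d1 d2 d3 d4 u1 u2 u3 u4 L3 yz Hyz).
Qed.
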